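(* The boundary set $\partial\Xi=\{\xi\in\Xi:\ \kappa(\xi)>1\}$ is infinite; that is, there are infinitely many $\xi\in\Xi$ which are the fractional part of at least two distinct periodic points of the scaling map $\gamma$.
   Context: Let $\lambda$ be the real root of $x^3+x^2+x-1$, $\omega=\lambda^3=1-\lambda-\lambda^2$. Every $x\in\mathbb{Q}(\lambda)$ is uniquely $x=r_0+r_1\lambda+r_2\lambda^2$ with $r_i\in\mathbb{Q}$; set $\Xi=\{\xi_0+\xi_1\lambda+\xi_2\lambda^2:\ \xi_i\in\mathbb{Q}\cap[0,1)\}$ and $\Pi_f(x)=\{r_0\}+\{r_1\}\lambda+\{r_2\}\lambda^2\in\Xi$ (fractional parts of coordinates). Scaling map: put $N=7$ and the data (for $j=0,\dots,6$): $\tau_0=\lambda+\lambda^2$, $\tau_1=-1+3\lambda$, $\tau_2=\lambda-\lambda^2$, $\tau_3=-1+2\lambda+\lambda^2$, $\tau_4=1-\lambda-\lambda^2$, $\tau_5=\lambda-\lambda^2$, $\tau_6=-\lambda$; $(\nu_0,\dots,\nu_6)=(4,13,12,8,8,12,4)$; path function $p(j,t)$, $0\le t<\nu_j$, is the $(t+1)$-th entry of the list: $j=0$: $(0,6,3,6)$; $j=1$: $(0,6,3,6,1,6,2,5,6,1,6,3,6)$; $j=2$: $(0,6,3,6,1,6,2,5,6,2,4,6)$; $j=3$: $(0,6,3,6,1,6,3,6)$; $j=4$: $(0,6,4,5,6,2,4,6)$; $j=5$: $(0,6,4,5,6,2,5,6,1,6,3,6)$; $j=6$: $(0,6,4,6)$.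 Let $\mathcal{V}$ be the set of sequences $\sigma=((j_1,t_1),(j_2,t_2),\dots)$ with $0\le j_k\le 6$, $0\le t_k<\nu_{j_k}$, $j_k=p(j_{k+1},t_{k+1})$ for all $k\ge1$, and which do not end in any of the tails $(1,9)^\infty,(2,6)^\infty,(3,2)^\infty,(4,6)^\infty,(5,3)^\infty,(6,1)^\infty$. Put $d_i=\sum_{t=0}^{t_i-1}\tau_{p(j_i,t)}$ and $x(\sigma)=\sum_{i\ge1}d_i\omega^{i-1}$; the map $\sigma\mapsto x(\sigma)$ is a bijection $\mathcal{V}\to[0,1)$. The scaling map $\gamma:[0,1)\to[0,1)$ is $\gamma(x)=(x-d_1)\omega^{-1}$, where $d_1$ is the first digit of the code of $x$; it is conjugate to the left shift on $\mathcal{V}$. A periodic point of $\gamma$ is an $x$ with $\gamma^n(x)=x$ for some $n\ge1$. For $\xi\in\Xi$, the multiplicity $\kappa(\xi)$ is the number of periodic points $x$ of $\gamma$ with $\Pi_f(x)=\xi$. *)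

(* Defs.v *)
From Stdlib Require Import Reals QArith Qreals List ClassicalEpsilon.
Import ListNotations.
Open Scope R_scope.

(* lam is a parameter of every definition; the theorem assumes
   lam^3 + lam^2 + lam - 1 = 0 (the polynomial has a unique real root). *)

Definition omega (lam : R) : R := lam ^ 3.

Definition tau (lam : R) (j : nat) : R :=
  match j with
  | 0%nat => lam + lam ^ 2
  | 1%nat => -1 + 3 * lam
  | 2%nat => lam - lam ^ 2
  | 3%nat => -1 + 2 * lam + lam ^ 2
  | 4%nat => 1 - lam - lam ^ 2
  | 5%nat => lam - lam ^ 2
  | _ => - lam
  end.

Definition nu (j : nat) : nat :=
  match j with
  | 0%nat => 4 | 1%nat => 13 | 2%nat => 12 | 3%nat => 8
  | 4%nat => 8 | 5%nat => 12 | _ => 4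
  end.

Definition plist (j : nat) : list nat :=
  match j with
  | 0%nat => [0;6;3;6]
  | 1%nat => [0;6;3;6;1;6;2;5;6;1;6;3;6]
  | 2%nat => [0;6;3;6;1;6;2;5;6;2;4;6]
  | 3%nat => [0;6;3;6;1;6;3;6]
  | 4%nat => [0;6;4;5;6;2;4;6]
  | 5%nat => [0;6;4;5;6;2;5;6;1;6;3;6]
  | _ => [0;6;4;6]
  end%nat.

(* path function p(j,t) = (t+1)-th entry of the list for j *)
Definition p (j t : nat) : nat := nth t (plist j) 0%nat.

Definition digit (lam : R) (s : nat * nat) : R :=
  fold_right Rplus 0 (map (fun u => tau lam (p (fst s) u)) (seq 0 (snd s))).

Definition bad_tails : list (nat * nat) :=
  [(1,9); (2,6); (3,2); (4,6); (5,3); (6,1)]%nat.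

(* sigma k = (j_{k+1}, t_{k+1}) : sequences are indexed from 0 *)
Definition valid (sigma : nat -> nat * nat) : Prop :=
  (forall k, (fst (sigma k) <= 6)%nat /\ (snd (sigma k) < nu (fst (sigma k)))%nat) /\
  (forall k, fst (sigma k) = p (fst (sigma (S k))) (snd (sigma (S k)))) /\
  ~ (exists K tl, In tl bad_tails /\ forall k, (K <= k)%nat -> sigma k = tl).

(* x(sigma) = sum_{i>=1} d_i omega^(i-1) = x *)
Definition is_code (lam : R) (sigma : nat -> nat * nat) (x : R) : Prop :=
  valid sigma /\
  infinite_sum (fun i => digit lam (sigma i) * (omega lam) ^ i) x.

(* the code of x (unique for x in [0,1), by the bijection V -> [0,1)) *)
Definition code (lam : R) (x : R) : nat -> nat * nat :=
  epsilon (inhabits (fun _ : nat => (0, 0)%nat)) (fun sigma => is_code lam sigma x).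

Definition gamma (lam : R) (x : R) : R :=
  (x - digit lam (code lam x 0%nat)) / omega lam.

Definition periodic_point (lam : R) (x : R) : Prop :=
  0 <= x < 1 /\ exists n : nat, (1 <= n)%nat /\ Nat.iter n (gamma lam) x = x.

(* Pi_f(x) = xi, where x = r0 + r1 lam + r2 lam^2 with r_i rational
   (coordinates are unique since lam has degree 3 over Q) *)
Definition PiF (lam : R) (x xi : R) : Prop :=
  exists r0 r1 r2 : Q,
    x = Q2R r0 + Q2R r1 * lam + Q2R r2 * lam ^ 2 /\
    xi = frac_part (Q2R r0) + frac_part (Q2R r1) * lam + frac_part (Q2R r2) * lam ^ 2.

Definition in_boundary (lam : R) (xi : R) : Prop :=
  exists x y : R, periodic_point lam x /\ periodic_point lam y /\ x <> y /\
    PiF lam x xi /\ PiF lam y xi.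

(* Main.v *)
Require Import Defs.
From Stdlib Require Import Reals List.
From Stdlib Require Import QArith Qreals Lra Lia Psatz ZArith ClassicalEpsilon FunctionalExtensionality FinFun.
Import ListNotations.
Open Scope R_scope.

Definition T3 := (Q * Q * Q)%type.
Definition qadd (s t : T3) : T3 :=
  let '(a,b,c) := s in let '(a',b',c') := t in ((a+a')%Q, (b+b')%Q, (c+c')%Q).
Definition qsub (s t : T3) : T3 :=
  let '(a,b,c) := s in let '(a',b',c') := t in ((a-a')%Q, (b-b')%Q, (c-c')%Q).
Definition qmul (s t : T3) : T3 :=
  let '(a0,a1,a2) := s in let '(b0,b1,b2) := t in
  let c0 := (a0*b0)%Q in let c1 := (a0*b1 + a1*b0)%Q in
  let c2 := (a0*b2 + a1*b1 + a2*b0)%Q in let c3 := (a1*b2 + a2*b1)%Q in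
  let c4 := (a2*b2)%Q in
  ((c0 + c3 - c4)%Q, (c1 - c3 + 2*c4)%Q, (c2 - c3)%Q).
Definition q0 : T3 := (0%Q,0%Q,0%Q).
Definition qmin (x y : Q) : Q := if Qle_bool x y then x else y.
Definition ql : Q := (5436890126920 # 10000000000000)%Q.
Definition qu : Q := (5436890126921 # 10000000000000)%Q.
Definition lowb (t : T3) : Q :=
  let '(a,b,c) := t in (a + qmin (b*ql) (b*qu) + qmin (c*(ql*ql)) (c*(qu*qu)))%Q.
Definition posq (t : T3) : bool := negb (Qle_bool (lowb t) 0).
Definition zeroq (t : T3) : bool :=
  let '(a,b,c) := t in Qeq_bool a 0 && Qeq_bool b 0 && Qeq_bool c 0.
Definition nnq (t : T3) : bool := zeroq t || posq t.
Definition eqq (s t : T3) : bool := zeroq (qsub s t).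

Definition tauq (j : nat) : T3 :=
  match j with
  | 0%nat => (0,1,1)
  | 1%nat => (-1,3,0)
  | 2%nat => (0,1,-1)
  | 3%nat => (-1,2,1)
  | 4%nat => (1,-1,-1)
  | 5%nat => (0,1,-1)
  | _ => (0,-1,0)
  end%Q.
Definition dq (s : nat * nat) : T3 :=
  fold_right qadd q0 (map (fun u => tauq (p (fst s) u)) (seq 0 (snd s))).
Definition cq (j : nat) : T3 :=
  match j with
  | 0%nat => (0,0,0)
  | 1%nat => (1,-1,-1)
  | 2%nat => (1,-2,1)
  | 3%nat => (3#2,-2,-1#2)
  | 4%nat => (1#2,0,-1#2)
  | 5%nat => (-1#2,1,3#2)
  | 6%nat => (0,1,0)
  | _ => (1,0,0)
  end%Q.
Definition om3 : T3 := (1,-1,-1)%Q.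
Definition allsyms : list (nat*nat) :=
  flat_map (fun j => map (fun t => (j,t)) (seq 0 (nu j))) (seq 0 7).

Definition inv_ok (s : nat*nat) : bool :=
  nnq (qsub (qadd (dq s) (qmul om3 (cq (fst s)))) (cq (p (fst s) (snd s)))) &&
  nnq (qsub (cq (S (p (fst s) (snd s)))) (qadd (dq s) (qmul om3 (cq (S (fst s)))))).
Definition dig_ok (s : nat*nat) : bool := nnq (dq s) && posq (qsub (1,0,0)%Q (dq s)).
Lemma inv_all : forallb inv_ok allsyms = true. Proof. vm_compute. reflexivity. Qed.
Lemma dig_all : forallb dig_ok allsyms = true. Proof. vm_compute. reflexivity. Qed.
Definition c_ok (j : nat) : bool := nnq (cq j) && nnq (qsub (1,0,0)%Q (cq j)).
Lemma c_all : forallb c_ok (seq 0 8) = true. Proof. vm_compute. reflexivity. Qed.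
Definition pieceL (s : nat*nat) : T3 := qadd (dq s) (qmul om3 (cq (fst s))).
Definition pieceR (s : nat*nat) : T3 := qadd (dq s) (qmul om3 (cq (S (fst s)))).
Definition chk (D lo hi : T3) (strict : bool) (s : nat*nat) : bool :=
  eqq (dq s) D || (if strict then nnq (qsub lo (pieceR s)) else posq (qsub lo (pieceR s)))
  || posq (qsub (pieceL s) hi).
Definition e2q : T3 := (0,0,1)%Q.
Definition U2 : T3 := qadd (dq (2,6)%nat) (qmul om3 (qadd (dq (2,9)%nat) (qmul om3 (cq 3)))).
Lemma chkX0 : forallb (chk (dq (0,2)%nat) e2q (qadd e2q (qmul om3 (cq 1))) true) allsyms = true.
Proof. vm_compute. reflexivity. Qed.
Lemma chkX1 : forallb (chk q0 q0 (qmul om3 (cq 4)) false) allsyms = true.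
Proof. vm_compute. reflexivity. Qed.
Lemma chkY9 : forallb (chk (dq (2,9)%nat) (qadd (dq (2,9)%nat) (qmul om3 (cq 2))) (qadd (dq (2,9)%nat) (qmul om3 U2)) false) allsyms = true.
Proof. vm_compute. reflexivity. Qed.
Lemma chkY6 : forallb (chk (dq (2,6)%nat) (qadd (dq (2,6)%nat) (qmul om3 (cq 2))) U2 false) allsyms = true.
Proof. vm_compute. reflexivity. Qed.
Lemma U2_ok : nnq (qsub U2 (qadd (dq (2,9)%nat) (qmul om3 (cq 3)))) = true.
Proof. vm_compute. reflexivity. Qed.


Section S.
Variable lam : R.
Hypothesis Hlam : lam ^ 3 + lam ^ 2 + lam - 1 = 0.

Lemma lam_pos : 0 < lam.
Proof.
  destruct (Rle_or_lt lam 0) as [H|H]; [|exact H].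
  exfalso. assert (lam^2 + lam + 1 > 0) by nra. nra.
Qed.

Lemma lam_lo : Q2R ql < lam.
Proof.
  pose proof lam_pos.
  destruct (Rlt_or_le (Q2R ql) lam) as [H1|H1]; [exact H1|exfalso].
  set (a := Q2R ql) in *.
  assert (Ha : a ^ 3 + a ^ 2 + a - 1 < 0).
  { unfold a. replace (Q2R ql ^ 3 + Q2R ql ^ 2 + Q2R ql - 1) with
       (Q2R (ql*ql*ql + ql*ql + ql - 1)%Q).
    - apply Rlt_le_trans with (Q2R 0). apply Qlt_Rlt. vm_compute. reflexivity. unfold Q2R; simpl; lra.
    - rewrite Q2R_minus, !Q2R_plus, !Q2R_mult. replace (Q2R 1) with 1 by (unfold Q2R; simpl; lra). ring. }
  assert (0 <= a) by (unfold a, Q2R, ql; simpl; lra).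
  assert (0 <= (a - lam) * (a^2 + a*lam + lam^2 + a + lam + 1)) by (apply Rmult_le_pos; nra).
  assert (E : (a - lam) * (a^2 + a*lam + lam^2 + a + lam + 1) = (a^3+a^2+a-1) - (lam^3+lam^2+lam-1)) by ring.
  lra.
Qed.

Lemma lam_hi : lam < Q2R qu.
Proof.
  pose proof lam_pos.
  destruct (Rlt_or_le lam (Q2R qu)) as [H1|H1]; [exact H1|exfalso].
  set (a := Q2R qu) in *.
  assert (Ha : a ^ 3 + a ^ 2 + a - 1 > 0).
  { unfold a. replace (Q2R qu ^ 3 + Q2R qu ^ 2 + Q2R qu - 1) with
       (Q2R (qu*qu*qu + qu*qu + qu - 1)%Q).
    - apply Rle_lt_trans with (Q2R 0). unfold Q2R; simpl; lra. apply Qlt_Rlt. vm_compute. reflexivity.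
    - rewrite Q2R_minus, !Q2R_plus, !Q2R_mult. replace (Q2R 1) with 1 by (unfold Q2R; simpl; lra). ring. }
  assert (0 <= a) by (unfold a, Q2R, qu; simpl; lra).
  assert (0 <= (lam - a) * (a^2 + a*lam + lam^2 + a + lam + 1)) by (apply Rmult_le_pos; nra).
  assert (E : (lam - a) * (a^2 + a*lam + lam^2 + a + lam + 1) = (lam^3+lam^2+lam-1) - (a^3+a^2+a-1)) by ring.
  lra.
Qed.
End S.

Section S.
Variable lam : R.
Hypothesis Hlam : lam ^ 3 + lam ^ 2 + lam - 1 = 0.

Definition evq (t : T3) : R := let '(a,b,c) := t in Q2R a + Q2R b * lam + Q2R c * lam^2.

Lemma Q2R_0 : Q2R 0 = 0. Proof. unfold Q2R; simpl; lra. Qed.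
Lemma Q2R_1 : Q2R 1 = 1. Proof. unfold Q2R; simpl; lra. Qed.
Lemma Q2R_2 : Q2R 2 = 2. Proof. unfold Q2R; simpl; lra. Qed.

Lemma evq_add s t : evq (qadd s t) = evq s + evq t.
Proof. destruct s as [[a b] c], t as [[a' b'] c']; simpl. rewrite !Q2R_plus. ring. Qed.
Lemma evq_sub s t : evq (qsub s t) = evq s - evq t.
Proof. destruct s as [[a b] c], t as [[a' b'] c']; simpl. rewrite !Q2R_minus. ring. Qed.
Lemma evq_mul s t : evq (qmul s t) = evq s * evq t.
Proof.
  destruct s as [[a0 a1] a2], t as [[b0 b1] b2]; simpl.
  repeat (rewrite Q2R_minus || rewrite Q2R_plus || rewrite Q2R_mult). rewrite Q2R_2.
  set (A0 := Q2R a0); set (A1 := Q2R a1); set (A2 := Q2R a2);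
  set (B0 := Q2R b0); set (B1 := Q2R b1); set (B2 := Q2R b2).
  assert (E : (A0 + A1 * lam + A2 * lam ^ 2) * (B0 + B1 * lam + B2 * lam ^ 2) -
    (A0 * B0 + (A1 * B2 + A2 * B1) - A2 * B2 +
     (A0 * B1 + A1 * B0 - (A1 * B2 + A2 * B1) + 2 * (A2 * B2)) * lam +
     (A0 * B2 + A1 * B1 + A2 * B0 - (A1 * B2 + A2 * B1)) * lam ^ 2)
     = ((A1 * B2 + A2 * B1) + A2*B2*(lam - 1)) * (lam^3+lam^2+lam-1)) by ring.
  rewrite Hlam, Rmult_0_r in E. lra.
Qed.

Lemma q0_ev : evq q0 = 0. Proof. simpl. rewrite Q2R_0. ring. Qed.

Lemma lam_b : Q2R ql < lam < Q2R qu.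
Proof. split; [apply lam_lo|apply lam_hi]; exact Hlam. Qed.

Lemma qmin_le1 x y : Q2R (qmin x y) <= Q2R x.
Proof. unfold qmin. destruct (Qle_bool x y) eqn:E; [lra|].
  apply Qle_Rle. assert (~ (x <= y)%Q). { intro H. apply Qle_bool_iff in H. congruence. }
  apply Qlt_le_weak, Qnot_le_lt. auto. Qed.
Lemma qmin_le2 x y : Q2R (qmin x y) <= Q2R y.
Proof. unfold qmin. destruct (Qle_bool x y) eqn:E; [|lra].
  apply Qle_Rle. apply Qle_bool_iff. exact E. Qed.

Lemma lowb_le t : Q2R (lowb t) <= evq t.
Proof.
  destruct t as [[a b] c]. unfold lowb; simpl.
  rewrite !Q2R_plus.
  pose proof lam_b as [L1 L2].
  pose proof (qmin_le1 (b*ql) (b*qu)). pose proof (qmin_le2 (b*ql) (b*qu)).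
  pose proof (qmin_le1 (c*(ql*ql)) (c*(qu*qu))). pose proof (qmin_le2 (c*(ql*ql)) (c*(qu*qu))).
  rewrite !Q2R_mult in *.
  assert (Hql : 0 < Q2R ql) by (unfold Q2R, ql; simpl; lra).
  assert (Hb : Q2R (qmin (b*ql) (b*qu)) <= Q2R b * lam).
  { destruct (Rle_or_lt 0 (Q2R b)).
    - apply Rle_trans with (Q2R b * Q2R ql); [lra| apply Rmult_le_compat_l; lra].
    - apply Rle_trans with (Q2R b * Q2R qu); [lra| nra]. }
  assert (Hc : Q2R (qmin (c*(ql*ql)) (c*(qu*qu))) <= Q2R c * lam^2).
  { assert (Q2R ql * Q2R ql <= lam^2 <= Q2R qu * Q2R qu) by (split; nra).
    destruct (Rle_or_lt 0 (Q2R c)).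
    - apply Rle_trans with (Q2R c * (Q2R ql * Q2R ql)); [lra| apply Rmult_le_compat_l; lra].
    - apply Rle_trans with (Q2R c * (Q2R qu * Q2R qu)); [lra| nra]. }
  lra.
Qed.

Lemma posq_sound t : posq t = true -> 0 < evq t.
Proof.
  intro H. unfold posq in H. apply negb_true_iff in H.
  apply Rlt_le_trans with (Q2R (lowb t)); [|apply lowb_le].
  rewrite <- Q2R_0. apply Qlt_Rlt. apply Qnot_le_lt. intro H'.
  apply Qle_bool_iff in H'. congruence.
Qed.

Lemma zeroq_sound t : zeroq t = true -> evq t = 0.
Proof.
  destruct t as [[a b] c]. simpl. intro H.
  apply andb_true_iff in H as [H H3]. apply andb_true_iff in H as [H1 H2].
  apply Qeq_bool_eq in H1, H2, H3. apply Qeq_eqR in H1, H2, H3.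
  rewrite H1, H2, H3, Q2R_0. ring.
Qed.

Lemma nnq_sound t : nnq t = true -> 0 <= evq t.
Proof.
  unfold nnq. intro H. apply orb_true_iff in H as [H|H].
  - rewrite zeroq_sound; auto; lra.
  - apply Rlt_le, posq_sound, H.
Qed.

Lemma eqq_sound s t : eqq s t = true -> evq s = evq t.
Proof. unfold eqq. intro H. apply zeroq_sound in H. rewrite evq_sub in H. lra. Qed.

Lemma tauq_ev k : evq (tauq k) = tau lam k.
Proof.
  destruct k as [|[|[|[|[|[|k]]]]]]; simpl;
  rewrite ?Q2R_0, ?Q2R_1; unfold Q2R; simpl; field.
Qed.

Lemma fold_ev (l : list nat) (f : nat -> T3) :
  evq (fold_right qadd q0 (map f l)) = fold_right Rplus 0 (map (fun u => evq (f u)) l).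
Proof.
  induction l as [|a l IH]; simpl. apply q0_ev. rewrite evq_add, IH. reflexivity.
Qed.

Lemma dq_ev s : evq (dq s) = digit lam s.
Proof.
  unfold dq, digit. rewrite fold_ev. f_equal. apply map_ext. intro. apply tauq_ev.
Qed.

Lemma om3_ev : evq om3 = omega lam.
Proof.
  unfold om3, omega. simpl. replace (Q2R (-1)) with (-1) by (unfold Q2R; simpl; lra).
  rewrite Q2R_1. lra.
Qed.

End S.

Lemma in_allsyms j t : (j <= 6)%nat -> (t < nu j)%nat -> In (j,t) allsyms.
Proof.
  intros Hj Ht. unfold allsyms. apply in_flat_map. exists j. split.
  - apply in_seq. lia.
  - apply in_map. apply in_seq. lia.
Qed.

Section S.
Variable lam : R.
Hypothesis Hlam : lam ^ 3 + lam ^ 2 + lam - 1 = 0.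
Let nnqS := nnq_sound lam Hlam.
Let posqS := posq_sound lam Hlam.
Let evq_mulS := evq_mul lam Hlam.
Let dq_evS := dq_ev lam.
Let om3_evS := om3_ev lam Hlam.

Definition term (sg : nat -> nat * nat) (i : nat) : R := digit lam (sg i) * omega lam ^ i.

Lemma om_b : 0.16 < omega lam < 0.17.
Proof.
  pose proof (lam_b lam Hlam) as [L1 L2].
  assert (Q2R ql > 0.5436) by (unfold Q2R, ql; simpl; lra).
  assert (Q2R qu < 0.5437) by (unfold Q2R, qu; simpl; lra).
  unfold omega. split; nra.
Qed.

Lemma sum_shift sg n :
  sum_f_R0 (term sg) (S n) = digit lam (sg 0%nat) + omega lam * sum_f_R0 (term (fun i => sg (S i))) n.
Proof.
  induction n as [|n IH].
  - simpl. unfold term. simpl. ring.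
  - change (sum_f_R0 (term sg) (S (S n))) with (sum_f_R0 (term sg) (S n) + term sg (S (S n))).
    change (sum_f_R0 (term (fun i => sg (S i))) (S n)) with
      (sum_f_R0 (term (fun i => sg (S i))) n + term (fun i => sg (S i)) (S n)).
    rewrite IH. unfold term. simpl. ring.
Qed.

Lemma shift_sum sg x : infinite_sum (term sg) x ->
  infinite_sum (term (fun i => sg (S i))) ((x - digit lam (sg 0%nat)) / omega lam).
Proof.
  intros H eps Heps. pose proof om_b as [O1 O2].
  destruct (H (eps * omega lam)) as [N HN]. { apply Rmult_lt_0_compat; lra. }
  exists N. intros n Hn. specialize (HN (S n) ltac:(lia)).
  rewrite sum_shift in HN. unfold Rdist in *.
  replace (sum_f_R0 (term (fun i => sg (S i))) n - (x - digit lam (sg 0%nat)) / omega lam)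
    with ((digit lam (sg 0%nat) + omega lam * sum_f_R0 (term (fun i => sg (S i))) n - x) / omega lam)
    by (field; lra).
  unfold Rdiv. rewrite Rabs_mult, Rabs_inv, (Rabs_right (omega lam)) by lra.
  apply Rmult_lt_reg_r with (omega lam); [lra|].
  rewrite Rmult_assoc, Rinv_l, Rmult_1_r by lra. exact HN.
Qed.

Lemma sum_exists sg : (forall i, 0 <= digit lam (sg i) <= 1) -> exists x, infinite_sum (term sg) x.
Proof.
  intro Hd. pose proof om_b as [O1 O2].
  assert (G := GP_infinite (omega lam) ltac:(rewrite Rabs_right; lra)).
  destruct (Rseries_CV_comp (term sg) (fun n => 1 * omega lam ^ n)) as [l Hl].
  - intro n. unfold term. specialize (Hd n). pose proof (pow_le (omega lam) n ltac:(lra)).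
    split; [apply Rmult_le_pos; lra|]. rewrite Rmult_1_l. 
    rewrite <- (Rmult_1_l (omega lam ^ n)) at 2. apply Rmult_le_compat_r; lra.
  - exists (/ (1 - omega lam)). exact G.
  - exists l. exact Hl.
Qed.

Lemma c_bounds j : 0 <= evq lam (cq j) <= 1.
Proof.
  assert (A : forall t, nnq t = true -> 0 <= evq lam t) by (intros; apply nnqS; auto).
  assert (B : forall j, c_ok j = true -> 0 <= evq lam (cq j) <= 1).
  { intros k Hk. unfold c_ok in Hk. apply andb_true_iff in Hk as [H1 H2].
    apply A in H1, H2. rewrite evq_sub in H2. simpl in H2 |- *.
    replace (Q2R 1) with 1 in H2 by (unfold Q2R; simpl; lra).
    rewrite !Q2R_0 in H2. split; lra. }
  apply B. destruct j as [|[|[|[|[|[|[|[|j]]]]]]]]; vm_compute; reflexivity.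
Qed.

Definition inr (sg : nat -> nat * nat) := forall k, In (sg k) allsyms.
Definition trans (sg : nat -> nat * nat) := forall k, fst (sg k) = p (fst (sg (S k))) (snd (sg (S k))).
Definition pp (s : nat * nat) := p (fst s) (snd s).

Lemma inv_facts s : In s allsyms ->
  evq lam (cq (pp s)) <= digit lam s + omega lam * evq lam (cq (fst s)) /\
  digit lam s + omega lam * evq lam (cq (S (fst s))) <= evq lam (cq (S (pp s))).
Proof.
  intro Hs. pose proof inv_all as H. rewrite forallb_forall in H. specialize (H s Hs).
  unfold inv_ok in H. apply andb_true_iff in H as [H1 H2].
  apply nnqS in H1, H2.
  rewrite evq_sub, evq_add, evq_mulS, dq_evS, om3_evS in H1, H2.
  unfold pp. split; lra.
Qed.

Lemma dig_facts s : In s allsyms -> 0 <= digit lam s < 1.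
Proof.
  intro Hs. pose proof dig_all as H. rewrite forallb_forall in H. specialize (H s Hs).
  unfold dig_ok in H. apply andb_true_iff in H as [H1 H2].
  apply nnqS in H1. apply posqS in H2.
  rewrite evq_sub, dq_evS in H2. rewrite dq_evS in H1.
  simpl in H2. replace (Q2R 1) with 1 in H2 by (unfold Q2R; simpl; lra).
  rewrite !Q2R_0 in H2. lra.
Qed.

Lemma partial_bound N : forall sg, inr sg -> trans sg ->
  evq lam (cq (pp (sg 0%nat))) - omega lam ^ (S N) <= sum_f_R0 (term sg) N <=
  evq lam (cq (S (pp (sg 0%nat)))) + omega lam ^ (S N).
Proof.
  pose proof om_b as [O1 O2].
  induction N as [|N IH]; intros sg Hi Ht.
  - change (sum_f_R0 (term sg) 0) with (term sg 0%nat). unfold term. rewrite pow_O, pow_1, Rmult_1_r.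
    destruct (inv_facts (sg 0%nat) (Hi 0%nat)) as [I1 I2].
    pose proof (c_bounds (fst (sg 0%nat))) as [C1 C2]. pose proof (c_bounds (S (fst (sg 0%nat)))) as [C3 C4].
    assert (omega lam * evq lam (cq (fst (sg 0%nat))) <= omega lam) by (rewrite <- (Rmult_1_r (omega lam)) at 2; apply Rmult_le_compat_l; lra).
    assert (0 <= omega lam * evq lam (cq (S (fst (sg 0%nat))))) by (apply Rmult_le_pos; lra).
    split; lra.
  - rewrite sum_shift.
    assert (Hi' : inr (fun i => sg (S i))) by (intro k; apply Hi).
    assert (Ht' : trans (fun i => sg (S i))) by (intro k; apply Ht).
    specialize (IH _ Hi' Ht').
    assert (E : pp (sg 1%nat) = fst (sg 0%nat)) by (unfold pp; rewrite (Ht 0%nat); reflexivity).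
    cbv beta in IH. rewrite E in IH.
    destruct (inv_facts (sg 0%nat) (Hi 0%nat)) as [I1 I2].
    change (omega lam ^ S (S N)) with (omega lam * omega lam ^ (S N)).
    split; nra.
Qed.

Lemma hull sg x : inr sg -> trans sg -> infinite_sum (term sg) x ->
  evq lam (cq (pp (sg 0%nat))) <= x <= evq lam (cq (S (pp (sg 0%nat)))).
Proof.
  intros Hi Ht Hs. pose proof om_b as [O1 O2].
  split.
  - destruct (Rle_or_lt (evq lam (cq (pp (sg 0%nat)))) x) as [H|H]; [exact H|exfalso].
    set (e := (evq lam (cq (pp (sg 0%nat))) - x) / 2).
    destruct (pow_lt_1_zero (omega lam) ltac:(rewrite Rabs_right; lra) e ltac:(unfold e; lra)) as [N1 HN1].
    destruct (Hs e ltac:(unfold e; lra)) as [N2 HN2].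
    set (n := (N1 + N2)%nat).
    specialize (HN1 (S n) ltac:(unfold n; lia)). specialize (HN2 n ltac:(unfold n; lia)).
    pose proof (partial_bound n sg Hi Ht) as [B1 B2].
    unfold Rdist in HN2. rewrite Rabs_right in HN1 by (apply Rle_ge, pow_le; lra).
    apply Rabs_def2 in HN2 as [HN3 HN4]. unfold e in *. lra.
  - destruct (Rle_or_lt x (evq lam (cq (S (pp (sg 0%nat)))))) as [H|H]; [exact H|exfalso].
    set (e := (x - evq lam (cq (S (pp (sg 0%nat))))) / 2).
    destruct (pow_lt_1_zero (omega lam) ltac:(rewrite Rabs_right; lra) e ltac:(unfold e; lra)) as [N1 HN1].
    destruct (Hs e ltac:(unfold e; lra)) as [N2 HN2].
    set (n := (N1 + N2)%nat).
    specialize (HN1 (S n) ltac:(unfold n; lia)). specialize (HN2 n ltac:(unfold n; lia)).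
    pose proof (partial_bound n sg Hi Ht) as [B1 B2].
    unfold Rdist in HN2. rewrite Rabs_right in HN1 by (apply Rle_ge, pow_le; lra).
    apply Rabs_def2 in HN2 as [HN3 HN4]. unfold e in *. lra.
Qed.

End S.

Section S.
Variable lam : R.
Hypothesis Hlam : lam ^ 3 + lam ^ 2 + lam - 1 = 0.
Let nnqS := nnq_sound lam Hlam.
Let posqS := posq_sound lam Hlam.
Let evq_mulS := evq_mul lam Hlam.
Let dq_evS := dq_ev lam.
Let om3_evS := om3_ev lam Hlam.
Let eqqS := eqq_sound lam.

Lemma valid_inr sg : valid sg -> inr sg.
Proof. intros [H _] k. destruct (H k) as [H1 H2]. destruct (sg k) as [j t]. apply in_allsyms; auto. Qed.
Lemma valid_trans sg : valid sg -> trans sg.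
Proof. intros [_ [H _]] k. apply H. Qed.

Lemma piece_of_code sg x : is_code lam sg x ->
  evq lam (pieceL (sg 0%nat)) <= x <= evq lam (pieceR (sg 0%nat)).
Proof.
  intros [Hv Hs]. pose proof (om_b lam Hlam) as [O1 O2].
  pose proof (shift_sum lam Hlam sg x Hs) as Ht.
  assert (Hi' : inr (fun i => sg (S i))) by (intro k; apply valid_inr; auto).
  assert (Ht' : trans (fun i => sg (S i))) by (intro k; apply valid_trans; auto).
  pose proof (hull lam Hlam _ _ Hi' Ht' Ht) as [B1 B2].
  assert (E : pp (sg 1%nat) = fst (sg 0%nat)) by (unfold pp; rewrite (valid_trans sg Hv 0%nat); reflexivity).
  cbv beta in B1, B2. rewrite E in B1, B2.
  unfold pieceL, pieceR. rewrite !evq_add, !evq_mulS, dq_evS, om3_evS.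
  set (d := digit lam (sg 0%nat)) in *.
  set (y := (x - d) / omega lam) in *.
  assert (Ey : x = d + omega lam * y) by (unfold y; field; lra).
  split; nra.
Qed.

Lemma gamma_step x sg D lo hi (strict : bool) : is_code lam sg x ->
  forallb (chk D lo hi strict) allsyms = true ->
  (if strict then evq lam lo < x else evq lam lo <= x) -> x <= evq lam hi ->
  gamma lam x = (x - evq lam D) / omega lam.
Proof.
  intros Hc Hchk Hlo Hhi.
  assert (Hc' : is_code lam (code lam x) x).
  { unfold code. apply epsilon_spec. exists sg. exact Hc. }
  pose proof (piece_of_code _ _ Hc') as [P1 P2].
  set (s := code lam x 0%nat) in *.
  assert (Hin : In s allsyms) by (apply valid_inr; destruct Hc'; auto).
  rewrite forallb_forall in Hchk. specialize (Hchk s Hin). unfold chk in Hchk.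
  unfold gamma. fold s.
  apply orb_true_iff in Hchk as [Hchk|Hchk]; [apply orb_true_iff in Hchk as [Hchk|Hchk]|].
  - apply eqqS in Hchk. rewrite dq_evS in Hchk. rewrite Hchk. reflexivity.
  - exfalso. destruct strict.
    + apply nnqS in Hchk. rewrite evq_sub in Hchk. lra.
    + apply posqS in Hchk. rewrite evq_sub in Hchk. lra.
  - exfalso. apply posqS in Hchk. rewrite evq_sub in Hchk. lra.
Qed.

Fixpoint xs (sg : nat -> nat * nat) (x : R) (k : nat) : R :=
  match k with
  | O => x
  | S k => (xs sg x k - digit lam (sg k)) / omega lam
  end.

Lemma xs_rel sg x k : xs sg x k = digit lam (sg k) + omega lam * xs sg x (S k).
Proof. pose proof (om_b lam Hlam). simpl. field. lra. Qed.

Lemma xs_sum sg x : infinite_sum (term lam sg) x ->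
  forall k, infinite_sum (term lam (fun i => sg (i + k)%nat)) (xs sg x k).
Proof.
  intros H k. induction k as [|k IH].
  - simpl. replace (fun i => sg (i + 0)%nat) with sg; auto.
    apply functional_extensionality. intro i. rewrite Nat.add_0_r. reflexivity.
  - pose proof (shift_sum lam Hlam _ _ IH) as H2. simpl in H2 |- *.
    replace (fun i => sg (i + S k)%nat) with (fun i => sg (S (i + k))); auto.
    apply functional_extensionality. intro i. f_equal. lia.
Qed.

Lemma valid_shift sg k : valid sg -> valid (fun i => sg (i + k)%nat).
Proof.
  intros [H1 [H2 H3]]. split; [|split].
  - intro i. apply H1.
  - intro i. replace (S i + k)%nat with (S (i + k)) by lia. apply H2.
  - intros [K [tl [Htl HK]]]. apply H3. exists (K + k)%nat, tl. split; auto.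
    intros i Hi. replace i with ((i - k) + k)%nat by lia. apply HK. lia.
Qed.

Lemma code_shift sg x k : is_code lam sg x -> is_code lam (fun i => sg (i + k)%nat) (xs sg x k).
Proof. intros [Hv Hs]. split. apply valid_shift; auto. apply xs_sum; auto. Qed.

Lemma xs_period sg x N : infinite_sum (term lam sg) x -> (forall i, sg (i + N)%nat = sg i) -> xs sg x N = x.
Proof.
  intros Hs Hp. pose proof (xs_sum sg x Hs N) as H.
  replace (fun i => sg (i + N)%nat) with sg in H by (apply functional_extensionality; intro; rewrite Hp; auto).
  eapply uniqueness_sum; eauto.
Qed.

Lemma iter_xs sg x N : (forall k, (k < N)%nat -> gamma lam (xs sg x k) = xs sg x (S k)) ->
  forall k, (k <= N)%nat -> Nat.iter k (gamma lam) x = xs sg x k.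
Proof.
  intros H k. induction k as [|k IH]; intro Hk.
  - reflexivity.
  - simpl. rewrite IH by lia. apply H. lia.
Qed.

End S.

Lemma modS N k : N <> 0%nat -> (S k mod N = if S (k mod N) =? N then 0 else S (k mod N))%nat.
Proof.
  intro HN. replace (S k) with (k + 1)%nat by lia.
  rewrite <- Nat.Div0.add_mod_idemp_l.
  pose proof (Nat.mod_upper_bound k N HN).
  destruct (Nat.eqb_spec (S (k mod N)) N) as [E|E].
  - replace (k mod N + 1)%nat with N by lia. apply Nat.Div0.mod_same.
  - replace (k mod N + 1)%nat with (S (k mod N)) by lia. apply Nat.mod_small. lia.
Qed.

Lemma mod_addN i N : ((i + N) mod N = i mod N)%nat.
Proof. replace (i + N)%nat with (i + 1 * N)%nat by lia. apply Nat.Div0.mod_add. Qed.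

Lemma mod_mulN m j N : (j < N)%nat -> ((m * N + j) mod N = j)%nat.
Proof. intro. rewrite Nat.add_comm, Nat.Div0.mod_add. apply Nat.mod_small. auto. Qed.

Definition sX (n k : nat) : nat * nat :=
  let r := (k mod (n + 2))%nat in
  if (r =? 0)%nat then (0,2)%nat else if (r =? S n)%nat then (3,0)%nat else (0,0)%nat.
Definition sY (n k : nat) : nat * nat :=
  if ((k mod (n + 2)) =? S n)%nat then (2,6)%nat else (2,9)%nat.

Lemma sX_per n i : sX n (i + (n+2)) = sX n i.
Proof. unfold sX. rewrite mod_addN. reflexivity. Qed.
Lemma sY_per n i : sY n (i + (n+2)) = sY n i.
Proof. unfold sY. rewrite mod_addN. reflexivity. Qed.

Lemma not_tail (sg : nat -> nat * nat) N a b : (0 < N)%nat ->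
  (forall m, sg (m * N)%nat = a) -> (forall m, sg (m * N + b)%nat = a -> False) ->
  ~ (exists K tl, In tl bad_tails /\ forall k, (K <= k)%nat -> sg k = tl).
Proof.
  intros HN Ha Hb [K [tl [_ HK]]].
  apply (Hb K). rewrite HK by nia. rewrite <- (HK (K * N)%nat) by nia. apply Ha.
Qed.

Lemma sX_valid n : (1 <= n)%nat -> valid (sX n).
Proof.
  intro Hn. split; [|split].
  - intro k. unfold sX. destruct (_ =? 0)%nat; [|destruct (_ =? S n)%nat]; simpl; lia.
  - intro k. unfold sX. rewrite (modS (n+2) k) by lia.
    pose proof (Nat.mod_upper_bound k (n+2) ltac:(lia)).
    set (r := (k mod (n+2))%nat) in *.
    destruct (Nat.eqb_spec r 0) as [E0|E0].
    + rewrite (proj2 (Nat.eqb_neq (S r) (n+2))) by lia.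
      rewrite (proj2 (Nat.eqb_neq (S r) 0)) by lia.
      rewrite (proj2 (Nat.eqb_neq (S r) (S n))) by lia. reflexivity.
    + destruct (Nat.eqb_spec r (S n)) as [E1|E1].
      * rewrite (proj2 (Nat.eqb_eq (S r) (n+2))) by lia. reflexivity.
      * rewrite (proj2 (Nat.eqb_neq (S r) (n+2))) by lia.
        rewrite (proj2 (Nat.eqb_neq (S r) 0)) by lia.
        destruct (Nat.eqb_spec (S r) (S n)); reflexivity.
  - apply (not_tail _ (n+2) (0,2)%nat 1%nat); [lia| |].
    + intro m. unfold sX. rewrite Nat.Div0.mod_mul. reflexivity.
    + intro m. unfold sX. rewrite mod_mulN by lia.
      rewrite (proj2 (Nat.eqb_neq 1 0)) by lia. rewrite (proj2 (Nat.eqb_neq 1 (S n))) by lia.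
      discriminate.
Qed.

Lemma sY_valid n : valid (sY n).
Proof.
  split; [|split].
  - intro k. unfold sY. destruct (_ =? S n)%nat; simpl; lia.
  - intro k. unfold sY. rewrite (modS (n+2) k) by lia.
    pose proof (Nat.mod_upper_bound k (n+2) ltac:(lia)).
    set (r := (k mod (n+2))%nat) in *.
    destruct (Nat.eqb_spec (S r) (n+2)) as [E|E].
    + rewrite (proj2 (Nat.eqb_eq r (S n))) by lia. rewrite (proj2 (Nat.eqb_neq 0 (S n))) by lia. reflexivity.
    + rewrite (proj2 (Nat.eqb_neq r (S n))) by lia.
      destruct (Nat.eqb_spec (S r) (S n)); reflexivity.
  - apply (not_tail _ (n+2) (2,9)%nat (S n)); [lia| |].
    + intro m. unfold sY. rewrite Nat.Div0.mod_mul. rewrite (proj2 (Nat.eqb_neq 0 (S n))) by lia. reflexivity.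
    + intro m. unfold sY. rewrite mod_mulN by lia. rewrite Nat.eqb_refl. discriminate.
Qed.

Lemma sX_0 n : sX n 0 = (0,2)%nat. Proof. unfold sX. rewrite Nat.Div0.mod_0_l. reflexivity. Qed.
Lemma sX_mid n k : (1 <= k <= n)%nat -> sX n k = (0,0)%nat.
Proof.
  intro H. unfold sX. rewrite Nat.mod_small by lia.
  rewrite (proj2 (Nat.eqb_neq k 0)) by lia. rewrite (proj2 (Nat.eqb_neq k (S n))) by lia. reflexivity.
Qed.
Lemma sX_last n : sX n (S n) = (3,0)%nat.
Proof. unfold sX. rewrite Nat.mod_small by lia. rewrite Nat.eqb_refl. reflexivity. Qed.
Lemma sX_cases n k : sX n k = (0,2)%nat \/ sX n k = (3,0)%nat \/ sX n k = (0,0)%nat.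
Proof. unfold sX. destruct (_ =? 0)%nat; [|destruct (_ =? S n)%nat]; auto. Qed.
Lemma sY_first n k : (k <= n)%nat -> sY n k = (2,9)%nat.
Proof. intro H. unfold sY. rewrite Nat.mod_small by lia. rewrite (proj2 (Nat.eqb_neq k (S n))) by lia. reflexivity. Qed.
Lemma sY_last n : sY n (S n) = (2,6)%nat.
Proof. unfold sY. rewrite Nat.mod_small by lia. rewrite Nat.eqb_refl. reflexivity. Qed.
Lemma sY_cases n k : sY n k = (2,9)%nat \/ sY n k = (2,6)%nat.
Proof. unfold sY. destruct (_ =? S n)%nat; auto. Qed.
Lemma sY_next n k : sY n k = (2,6)%nat -> sY n (S k) = (2,9)%nat.
Proof.
  unfold sY. rewrite (modS (n+2) k) by lia. intro H.
  destruct (Nat.eqb_spec (k mod (n+2)) (S n)) as [E|E]; [|discriminate].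
  rewrite E. rewrite (proj2 (Nat.eqb_eq (S (S n)) (n+2))) by lia.
  rewrite (proj2 (Nat.eqb_neq 0 (S n))) by lia. reflexivity.
Qed.

Lemma c2_fix_ok : eqq (cq 2) (qadd (dq (2,9)%nat) (qmul om3 (cq 2))) = true.
Proof. vm_compute. reflexivity. Qed.
Lemma c14_ok : nnq (qsub (cq 4) (cq 1)) = true.
Proof. vm_compute. reflexivity. Qed.
Lemma c4_ok : posq (qsub (1,0,0)%Q (cq 4)) = true.
Proof. vm_compute. reflexivity. Qed.
Lemma c3_ok : posq (qsub (1,0,0)%Q (cq 3)) = true.
Proof. vm_compute. reflexivity. Qed.

Section S.
Variable lam : R.
Hypothesis Hlam : lam ^ 3 + lam ^ 2 + lam - 1 = 0.
Let nnqS := nnq_sound lam Hlam.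
Let posqS := posq_sound lam Hlam.
Let evq_mulS := evq_mul lam Hlam.
Let dq_evS := dq_ev lam.
Let om3_evS := om3_ev lam Hlam.
Let eqqS := eqq_sound lam.
Let omb := om_b lam Hlam.

Lemma hull_xs sg x k : is_code lam sg x ->
  evq lam (cq (pp (sg k))) <= xs lam sg x k <= evq lam (cq (S (pp (sg k)))).
Proof.
  intro Hc. pose proof (code_shift lam Hlam sg x k Hc) as [Hv Hs].
  apply (hull lam Hlam _ _ (valid_inr _ Hv) (valid_trans _ Hv) Hs).
Qed.

Lemma dig02 : digit lam (0,2)%nat = lam^2. Proof. unfold digit. simpl. ring. Qed.
Lemma dig00 : digit lam (0,0)%nat = 0. Proof. reflexivity. Qed.
Lemma dig30 : digit lam (3,0)%nat = 0. Proof. reflexivity. Qed.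
Lemma dig29 : digit lam (2,9)%nat = -2 + 4*lam. Proof. unfold digit. simpl. ring. Qed.
Lemma dig26 : digit lam (2,6)%nat = -2 + 3*lam + 2*lam^2. Proof. unfold digit. simpl. ring. Qed.
Lemma evc0 : evq lam (cq 0) = 0. Proof. simpl. rewrite !Q2R_0. ring. Qed.
Lemma evc2 : evq lam (cq 2) = 1 - 2*lam + lam^2. Proof. simpl. unfold Q2R; simpl. field. Qed.
Lemma eve2 : evq lam e2q = lam^2. Proof. simpl. unfold Q2R; simpl. field. Qed.
Lemma evc_ge0 j : 0 <= evq lam (cq j). Proof. apply (c_bounds lam Hlam). Qed.

Lemma c14 : evq lam (cq 1) <= evq lam (cq 4).
Proof. pose proof (nnqS _ c14_ok). rewrite evq_sub in H. lra. Qed.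
Lemma c4lt1 : evq lam (cq 4) < 1.
Proof. pose proof (posqS _ c4_ok). rewrite evq_sub in H. simpl in H |- *.
  replace (Q2R 1) with 1 in H by (unfold Q2R; simpl; lra). rewrite !Q2R_0 in H. lra. Qed.
Lemma c3lt1 : evq lam (cq 3) < 1.
Proof. pose proof (posqS _ c3_ok). rewrite evq_sub in H. simpl in H |- *.
  replace (Q2R 1) with 1 in H by (unfold Q2R; simpl; lra). rewrite !Q2R_0 in H. lra. Qed.
Lemma c2fix : evq lam (cq 2) = digit lam (2,9)%nat + omega lam * evq lam (cq 2).
Proof. pose proof (eqqS _ _ c2_fix_ok). rewrite evq_add, evq_mulS, dq_evS, om3_evS in H. exact H. Qed.

Section X.
Variable n : nat.
Hypothesis Hn : (1 <= n)%nat.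
Variable x : R.
Hypothesis Hx : is_code lam (sX n) x.

Let xsX := xs lam (sX n) x.

Lemma X_pow k : (1 <= k <= n + 2)%nat -> xsX k * omega lam ^ k = x - lam^2.
Proof.
  pose proof omb as [O1 O2].
  induction k as [|k IH]; intro Hk; [lia|].
  destruct (Nat.eq_dec k 0) as [E|E].
  - subst k. unfold xsX. simpl. rewrite sX_0, dig02. field. lra.
  - unfold xsX in *. simpl xs. change (omega lam ^ S k) with (omega lam * omega lam ^ k).
    assert (Hd : digit lam (sX n k) = 0).
    { destruct (le_lt_dec k n). rewrite sX_mid by lia. apply dig00.
      replace k with (S n) by lia. rewrite sX_last. apply dig30. }
    rewrite Hd. rewrite <- IH by lia. field. lra.
Qed.

Lemma X_value : x * (1 - omega lam ^ (n+2)) = lam^2.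
Proof.
  pose proof (X_pow (n+2) ltac:(lia)) as H.
  unfold xsX in H. rewrite (xs_period lam Hlam _ _ _ (proj2 Hx) (sX_per n)) in H. lra.
Qed.

Lemma X_gamma k : (k < n + 2)%nat -> gamma lam (xsX k) = xsX (S k).
Proof.
  pose proof omb as [O1 O2]. intro Hk.
  pose proof (code_shift lam Hlam _ _ k Hx) as Hck.
  destruct (Nat.eq_dec k 0) as [E|E].
  - subst k. unfold xsX. 
    assert (HP : 0 < omega lam ^ (n+2) < 1).
    { split. apply pow_lt; lra. apply pow_lt_1_compat; [lra|lia]. }
    pose proof X_value as XV.
    assert (Hl : 0 < lam) by (apply lam_pos; auto).
    set (P := omega lam ^ (n+2)) in *.
    assert (Hl2 : 0 < lam^2) by (apply pow_lt; lra).
    assert (Hx0 : 0 < x).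
    { destruct (Rle_or_lt x 0) as [H0|H0]; [exfalso|exact H0].
      assert (0 <= (-x) * (1 - P)) by (apply Rmult_le_pos; lra). lra. }
    assert (Hxp : lam^2 < x).
    { assert (E : x - lam^2 = x * P) by (rewrite <- XV; ring).
      assert (0 < x * P) by (apply Rmult_lt_0_compat; lra). lra. }
    pose proof (hull_xs _ _ 1 Hx) as [B1 B2].
    rewrite sX_mid in B1, B2 by lia. replace (pp (0,0)%nat) with 0%nat in B1, B2 by reflexivity.
    pose proof (xs_rel lam Hlam (sX n) x 0) as R0. rewrite sX_0, dig02 in R0.
    change (xs lam (sX n) x 0) with x in R0 |- *.
    rewrite (gamma_step lam Hlam x _ _ _ _ true Hx chkX0).
    + rewrite dq_evS. simpl xs. rewrite sX_0. reflexivity.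
    + rewrite eve2. exact Hxp.
    + rewrite evq_add, evq_mulS, om3_evS, eve2. rewrite R0.
      apply Rplus_le_compat_l. apply Rmult_le_compat_l; lra.
  - unfold xsX.
    assert (Hd : digit lam (sX n k) = 0).
    { destruct (le_lt_dec k n). rewrite sX_mid by lia. apply dig00.
      replace k with (S n) by lia. rewrite sX_last. apply dig30. }
    pose proof (hull_xs _ _ (S k) Hx) as [B1 B2].
    assert (Hup : xs lam (sX n) x (S k) <= evq lam (cq 4)).
    { pose proof c14. destruct (sX_cases n (S k)) as [E1|[E1|E1]]; rewrite E1 in B2.
      - change (pp (0,2)%nat) with 3%nat in B2. exact B2.
      - change (pp (3,0)%nat) with 0%nat in B2. lra.
      - change (pp (0,0)%nat) with 0%nat in B2. lra. }
    assert (Hlo : 0 <= xs lam (sX n) x (S k)) by (pose proof (evc_ge0 (pp (sX n (S k)))); lra).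
    pose proof (xs_rel lam Hlam (sX n) x k) as R0. rewrite Hd in R0.
    rewrite (gamma_step lam Hlam _ _ _ _ _ false Hck chkX1).
    + rewrite q0_ev. simpl xs. rewrite Hd. reflexivity.
    + rewrite q0_ev. nra.
    + rewrite evq_mulS, om3_evS. nra.
Qed.

Lemma X_periodic : periodic_point lam x.
Proof.
  split.
  - pose proof (hull_xs _ _ 0 Hx) as [B1 B2]. rewrite sX_0 in B1, B2. change (pp (0,2)%nat) with 3%nat in B1, B2.
    pose proof (evc_ge0 3). pose proof c4lt1. change (xs lam (sX n) x 0) with x in B1, B2. split; lra.
  - exists (n+2)%nat. split; [lia|].
    rewrite (iter_xs lam (sX n) x (n+2) X_gamma (n+2)) by lia.
    apply (xs_period lam Hlam _ _ _ (proj2 Hx) (sX_per n)).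
Qed.
End X.

Section Y.
Variable n : nat.
Variable y : R.
Hypothesis Hy : is_code lam (sY n) y.

Let xsY := xs lam (sY n) y.

Lemma Y_hull i : evq lam (cq 2) <= xsY i <= evq lam (cq 3).
Proof.
  pose proof (hull_xs _ _ i Hy) as [B1 B2].
  destruct (sY_cases n i) as [E|E]; rewrite E in B1, B2;
  [change (pp (2,9)%nat) with 2%nat in B1, B2 | change (pp (2,6)%nat) with 2%nat in B1, B2];
  split; assumption.
Qed.

Lemma Y_U2 i : xsY i <= evq lam U2.
Proof.
  pose proof omb as [O1 O2].
  pose proof (nnqS _ U2_ok) as HU. rewrite evq_sub, evq_add, evq_mulS, dq_evS, om3_evS in HU.
  unfold U2. rewrite evq_add, evq_mulS, evq_add, evq_mulS, !dq_evS, om3_evS.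
  unfold U2 in HU. rewrite evq_add, evq_mulS, evq_add, evq_mulS, !dq_evS, om3_evS in HU.
  pose proof (xs_rel lam Hlam (sY n) y i) as R0.
  pose proof (Y_hull (S i)) as [H1 H2]. unfold xsY in *.
  destruct (sY_cases n i) as [E|E]; rewrite E in R0.
  - rewrite R0. assert (omega lam * xs lam (sY n) y (S i) <= omega lam * evq lam (cq 3)) by (apply Rmult_le_compat_l; lra). lra.
  - pose proof (xs_rel lam Hlam (sY n) y (S i)) as R1. rewrite (sY_next n i E) in R1.
    pose proof (Y_hull (S (S i))) as [H3 H4]. unfold xsY in *.
    rewrite R0, R1.
    assert (omega lam * xs lam (sY n) y (S (S i)) <= omega lam * evq lam (cq 3)) by (apply Rmult_le_compat_l; lra).
    assert (omega lam * (digit lam (2,9)%nat + omega lam * xs lam (sY n) y (S (S i))) <=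
            omega lam * (digit lam (2,9)%nat + omega lam * evq lam (cq 3))) by (apply Rmult_le_compat_l; lra).
    lra.
Qed.

Lemma Y_gamma k : gamma lam (xsY k) = xsY (S k).
Proof.
  pose proof omb as [O1 O2].
  pose proof (code_shift lam Hlam _ _ k Hy) as Hck.
  pose proof (xs_rel lam Hlam (sY n) y k) as R0.
  pose proof (Y_hull (S k)) as [H1 H2]. pose proof (Y_U2 (S k)) as H3. pose proof (Y_U2 k) as H4.
  unfold xsY in *.
  destruct (sY_cases n k) as [E|E].
  - rewrite (gamma_step lam Hlam _ _ _ _ _ false Hck chkY9).
    + rewrite dq_evS. simpl xs. rewrite E. reflexivity.
    + rewrite evq_add, evq_mulS, om3_evS, dq_evS. rewrite E in R0. rewrite R0.
      apply Rplus_le_compat_l. apply Rmult_le_compat_l; lra.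
    + rewrite evq_add, evq_mulS, om3_evS, dq_evS. rewrite E in R0. rewrite R0.
      apply Rplus_le_compat_l. apply Rmult_le_compat_l; lra.
  - rewrite (gamma_step lam Hlam _ _ _ _ _ false Hck chkY6).
    + rewrite dq_evS. simpl xs. rewrite E. reflexivity.
    + rewrite evq_add, evq_mulS, om3_evS, dq_evS. rewrite E in R0. rewrite R0.
      apply Rplus_le_compat_l. apply Rmult_le_compat_l; lra.
    + exact H4.
Qed.

Lemma Y_periodic : periodic_point lam y.
Proof.
  split.
  - pose proof (Y_hull 0) as [B1 B2]. pose proof (evc_ge0 2). pose proof c3lt1.
    unfold xsY in *. change (xs lam (sY n) y 0) with y in B1, B2. split; lra.
  - exists (n+2)%nat. split; [lia|].
    rewrite (iter_xs lam (sY n) y (n+2) (fun k _ => Y_gamma k) (n+2)) by lia.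
    apply (xs_period lam Hlam _ _ _ (proj2 Hy) (sY_per n)).
Qed.

Lemma Y_pow k : (k <= S n)%nat -> (xsY k - evq lam (cq 2)) * omega lam ^ k = y - evq lam (cq 2).
Proof.
  pose proof omb as [O1 O2]. pose proof c2fix as CF.
  induction k as [|k IH]; intro Hk.
  - unfold xsY. simpl. ring.
  - unfold xsY in *. simpl xs. change (omega lam ^ S k) with (omega lam * omega lam ^ k).
    rewrite (sY_first n k) by lia. rewrite <- IH by lia.
    set (X := xs lam (sY n) y k). set (c := evq lam (cq 2)) in *. set (d := digit lam (2,9)%nat) in *.
    set (W := omega lam ^ k).
    assert (E1 : ((X - d) / omega lam - c) * (omega lam * W) = (X - (d + omega lam * c)) * W) by (field; lra).
    rewrite E1, <- CF. reflexivity.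
Qed.

Lemma Y_value : y * (1 - omega lam ^ (n+2)) =
  evq lam (cq 2) + omega lam ^ (S n) * (digit lam (2,6)%nat - evq lam (cq 2)).
Proof.
  pose proof omb as [O1 O2].
  pose proof (Y_pow (S n) ltac:(lia)) as H.
  pose proof (xs_period lam Hlam _ _ _ (proj2 Hy) (sY_per n)) as HP.
  pose proof (xs_rel lam Hlam (sY n) y (S n)) as R. rewrite sY_last in R.
  replace (S (S n)) with (n+2)%nat in R by lia. rewrite HP in R.
  unfold xsY in H. rewrite R in H.
  replace (n+2)%nat with (S (S n)) by lia. change (omega lam ^ S (S n)) with (omega lam * omega lam ^ (S n)).
  lra.
Qed.
End Y.

End S.

Definition R3 := (R * R * R)%type.
Definition rmul (s t : R3) : R3 :=
  let '(a0,a1,a2) := s in let '(b0,b1,b2) := t in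
  let c0 := a0*b0 in let c1 := a0*b1 + a1*b0 in
  let c2 := a0*b2 + a1*b1 + a2*b0 in let c3 := a1*b2 + a2*b1 in
  let c4 := a2*b2 in
  (c0 + c3 - c4, c1 - c3 + 2*c4, c2 - c3).
Definition radj (s : R3) : R3 :=
  let '(s0,s1,s2) := s in
  (2*s2^2 - 2*s1*s2 + s1^2 - s0*s2 - s0*s1 + s0^2,
   2*s2^2 - s1*s2 + s1^2 - s0*s1,
   s2^2 - s1*s2 + s1^2 - s0*s2).
Definition rnrm (s : R3) : R :=
  let '(s0,s1,s2) := s in
  s2^3 + s1*s2^2 - s1^2*s2 + s1^3 + 3*s0*s2^2 - 4*s0*s1*s2 + s0*s1^2 - s0^2*s2 - s0^2*s1 + s0^3.
Definition rscal (k : R) (s : R3) : R3 := let '(a,b,c) := s in (k*a, k*b, k*c).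

Section S.
Variable lam : R.
Hypothesis Hlam : lam ^ 3 + lam ^ 2 + lam - 1 = 0.

Definition rev3 (t : R3) : R := let '(a,b,c) := t in a + b * lam + c * lam^2.
Definition uf (t : R3) : R := let '(a,b,c) := t in a - c * (lam^2+lam+1).
Definition vf (t : R3) : R := let '(a,b,c) := t in b - c * (1+lam).
Definition Qf (u v : R) : R := u*u - (1+lam)*u*v + (lam^2+lam+1)*v*v.
Definition Hf (t : R3) : R := Qf (uf t) (vf t).

Lemma rev_mul s t : rev3 (rmul s t) = rev3 s * rev3 t.
Proof.
  destruct s as [[a0 a1] a2], t as [[b0 b1] b2]. unfold rmul, rev3.
  assert (E : (a0 + a1 * lam + a2 * lam ^ 2) * (b0 + b1 * lam + b2 * lam ^ 2) -
    (a0 * b0 + (a1 * b2 + a2 * b1) - a2 * b2 +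
     (a0 * b1 + a1 * b0 - (a1 * b2 + a2 * b1) + 2 * (a2 * b2)) * lam +
     (a0 * b2 + a1 * b1 + a2 * b0 - (a1 * b2 + a2 * b1)) * lam ^ 2)
     = ((a1 * b2 + a2 * b1) + a2*b2*(lam - 1)) * (lam^3+lam^2+lam-1)) by ring.
  rewrite Hlam, Rmult_0_r in E. lra.
Qed.

Lemma H_mul s t : Hf (rmul s t) = Hf s * Hf t.
Proof.
  destruct s as [[s0 s1] s2], t as [[t0 t1] t2]. cbv beta iota zeta delta [Hf Qf uf vf rmul].
  assert (E : ((-6)*s2^2*t2^2 + (7)*s2^2*t1*t2 + (-3)*s2^2*t1^2 + (1)*s2^2*t0*t1 + (7)*s1*s2*t2^2 + (-6)*s1*s2*t1*t2 + (1)*s1*s2*t1^2 + (-2)*s1*s2*t0*t2 + (1)*s1*s2*t0*t1 + (-3)*s1^2*t2^2 + (1)*s1^2*t1*t2 + (1)*s1^2*t0*t2 + (-2)*s0*s2*t1*t2 + (1)*s0*s2*t1^2 + (3)*s0*s2*t0*t2 + (-2)*s0*s2*t0*t1 + (1)*s0*s1*t2^2 + (1)*s0*s1*t1*t2 + (-2)*s0*s1*t0*t2 + (-8)*lam*s2^2*t2^2 + (6)*lam*s2^2*t1*t2 + (-2)*lam*s2^2*t1^2 + (2)*lam*s2^2*t0*t2 + (6)*lam*s1*s2*t2^2 + (-2)*lam*s1*s2*t1*t2 + (-3)*lam*s1*s2*t0*t2 + (1)*lam*s1*s2*t0*t1 + (-2)*lam*s1^2*t2^2 + (1)*lam*s1^2*t0*t2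 + (2)*lam*s0*s2*t2^2 + (-3)*lam*s0*s2*t1*t2 + (1)*lam*s0*s2*t1^2 + (1)*lam*s0*s2*t0*t2 + (1)*lam*s0*s1*t1*t2 + (-8)*lam^2*s2^2*t2^2 + (5)*lam^2*s2^2*t1*t2 + (-2)*lam^2*s2^2*t1^2 + (1)*lam^2*s2^2*t0*t2 + (1)*lam^2*s2^2*t0*t1 + (5)*lam^2*s1*s2*t2^2 + (-3)*lam^2*s1*s2*t1*t2 + (1)*lam^2*s1*s2*t1^2 + (-1)*lam^2*s1*s2*t0*t2 + (-2)*lam^2*s1^2*t2^2 + (1)*lam^2*s1^2*t1*t2 + (1)*lam^2*s0*s2*t2^2 + (-1)*lam^2*s0*s2*t1*t2 + (1)*lam^2*s0*s1*t2^2 + (-6)*lam^3*s2^2*t2^2 + (3)*lam^3*s2^2*t1*t2 + (-1)*lam^3*s2^2*t1^2 + (1)*lam^3*s2^2*t0*t2 + (3)*lam^3*s1*s2*t2^2 + (-1)*lam^3*s1*s2*t1*t2 + (-1)*lam^3*s1^2*t2^2 + (1)*lam^3*s0*s2*t2^2 + (-3)*lam^4*s2^2*t2^2 + (1)*lam^4*s2^2*t1*t2 + (1)*lam^4*s1*s2*t2^2 + (-1)*lam^5*s2^2*t2^2) * (lam^3+lam^2+lam-1) = 0) by (rewrite Hlam; ring).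
  apply Rminus_diag_uniq. rewrite <- E. ring.
Qed.

Lemma nrm_id s : rnrm s = rev3 s * Hf s.
Proof.
  destruct s as [[s0 s1] s2]. cbv beta iota zeta delta [Hf Qf uf vf rnrm rev3].
  assert (E : ((-1)*s2^3 + (-1)*s1*s2^2 + (1)*s1^2*s2 + (-1)*s1^3 + (-2)*s0*s2^2 + (3)*s0*s1*s2 + (-1)*lam*s2^3 + (-1)*lam^2*s2^3 + (-1)*lam^3*s2^3) * (lam^3+lam^2+lam-1) = 0) by (rewrite Hlam; ring).
  apply Rminus_diag_uniq. rewrite <- E. ring.
Qed.

End S.

Lemma adj_id s : rmul (radj s) s = (rnrm s, 0, 0).
Proof. destruct s as [[s0 s1] s2]. unfold rmul, radj, rnrm. f_equal; [f_equal|]; ring. Qed.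
Lemma rmul_assoc a b c : rmul (rmul a b) c = rmul a (rmul b c).
Proof. destruct a as [[a0 a1] a2], b as [[b0 b1] b2], c as [[c0 c1] c2]. unfold rmul. f_equal; [f_equal|]; ring. Qed.
Lemma rmul_scal k a b : rmul (rscal k a) b = rscal k (rmul a b).
Proof. destruct a as [[a0 a1] a2], b as [[b0 b1] b2]. unfold rmul, rscal. f_equal; [f_equal|]; ring. Qed.

Definition Z3 := (Z * Z * Z)%type.
Definition zmul (s t : Z3) : Z3 :=
  let '(a0,a1,a2) := s in let '(b0,b1,b2) := t in
  let c0 := (a0*b0)%Z in let c1 := (a0*b1 + a1*b0)%Z in
  let c2 := (a0*b2 + a1*b1 + a2*b0)%Z in let c3 := (a1*b2 + a2*b1)%Z in
  let c4 := (a2*b2)%Z in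
  ((c0 + c3 - c4)%Z, (c1 - c3 + 2*c4)%Z, (c2 - c3)%Z).
Fixpoint zpw (k : nat) : Z3 :=
  match k with O => (1%Z,0%Z,0%Z) | S k => zmul (zpw k) (1%Z,(-1)%Z,(-1)%Z) end.
Definition zP (k : nat) : Z3 := let '(a,b,c) := zpw k in ((1-a)%Z, (-b)%Z, (-c)%Z).
Definition zadj (s : Z3) : Z3 :=
  let '(s0,s1,s2) := s in
  ((2*s2*s2 - 2*s1*s2 + s1*s1 - s0*s2 - s0*s1 + s0*s0)%Z,
   (2*s2*s2 - s1*s2 + s1*s1 - s0*s1)%Z,
   (s2*s2 - s1*s2 + s1*s1 - s0*s2)%Z).
Definition znrm (s : Z3) : Z :=
  let '(s0,s1,s2) := s in
  (s2*s2*s2 + s1*s2*s2 - s1*s1*s2 + s1*s1*s1 + 3*s0*s2*s2 - 4*s0*s1*s2 + s0*s1*s1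
   - s0*s0*s2 - s0*s0*s1 + s0*s0*s0)%Z.
Definition zr (s : Z3) : R3 := let '(a,b,c) := s in (IZR a, IZR b, IZR c).
Definition zt (k : nat) : Z3 := zmul (0%Z,0%Z,1%Z) (zadj (zP k)).

Ltac tri := match goal with |- (?a,?b,?c) = (?a',?b',?c') =>
  let H1 := fresh in let H2 := fresh in let H3 := fresh in
  assert (H1 : a = a') by ring; assert (H2 : b = b') by ring; assert (H3 : c = c') by ring;
  congruence end.
Ltac zpush := repeat (rewrite plus_IZR || rewrite minus_IZR || rewrite mult_IZR || rewrite opp_IZR).

Lemma zr_mul s t : zr (zmul s t) = rmul (zr s) (zr t).
Proof. destruct s as [[a0 a1] a2], t as [[b0 b1] b2]. cbv beta iota zeta delta [zmul zr rmul]. zpush. tri. Qed.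
Lemma zr_adj s : zr (zadj s) = radj (zr s).
Proof. destruct s as [[a0 a1] a2]. cbv beta iota zeta delta [zadj zr radj]. zpush. tri. Qed.
Lemma zr_nrm s : IZR (znrm s) = rnrm (zr s).
Proof. destruct s as [[a0 a1] a2]. cbv beta iota zeta delta [znrm zr rnrm]. zpush. ring. Qed.

Lemma Qf_nonneg lam u v : 0 <= Qf lam u v.
Proof.
  unfold Qf.
  assert (E : u*u - (1+lam)*u*v + (lam^2+lam+1)*v*v =
    (u - (1+lam)/2 * v)^2 + ((3*lam^2+2*lam+3)/4) * v^2) by field.
  rewrite E. assert (0 <= 3*lam^2+2*lam+3) by nra.
  assert (0 <= v^2) by apply pow2_ge_0. assert (0 <= (u - (1+lam)/2 * v)^2) by apply pow2_ge_0.
  assert (0 <= (3*lam^2+2*lam+3)/4 * v^2) by (apply Rmult_le_pos; lra). lra.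
Qed.

Section S.
Variable lam : R.
Hypothesis Hlam : lam ^ 3 + lam ^ 2 + lam - 1 = 0.

Lemma lamd : 0.5436 < lam < 0.5437.
Proof.
  pose proof (lam_b lam Hlam) as [L1 L2].
  assert (Q2R ql > 0.5436) by (unfold Q2R, ql; simpl; lra).
  assert (Q2R qu < 0.5437) by (unfold Q2R, qu; simpl; lra). lra.
Qed.

Definition om_r : R3 := (1,-1,-1).

Lemma rev_om : rev3 lam om_r = omega lam.
Proof. unfold rev3, om_r, omega. lra. Qed.

Lemma zpw_r k : zr (zpw (S k)) = rmul (zr (zpw k)) om_r.
Proof. simpl zpw. rewrite zr_mul. reflexivity. Qed.

Lemma rev_pw k : rev3 lam (zr (zpw k)) = omega lam ^ k.
Proof.
  induction k as [|k IH].
  - simpl. ring.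
  - rewrite zpw_r, rev_mul, IH, rev_om by exact Hlam. simpl. ring.
Qed.

Lemma H_pw k : Hf lam (zr (zpw k)) = Hf lam om_r ^ k.
Proof.
  induction k as [|k IH].
  - unfold Hf, Qf, uf, vf. simpl. ring.
  - rewrite zpw_r, H_mul, IH by exact Hlam. simpl. ring.
Qed.

Lemma H_om : 6 <= Hf lam om_r.
Proof.
  pose proof lamd as [L1 L2].
  unfold Hf, Qf, uf, vf, om_r.
  assert (E : (1 - -1 * (lam ^ 2 + lam + 1)) * (1 - -1 * (lam ^ 2 + lam + 1)) -
   (1 + lam) * (1 - -1 * (lam ^ 2 + lam + 1)) * (-1 - -1 * (1 + lam)) +
   (lam ^ 2 + lam + 1) * (-1 - -1 * (1 + lam)) * (-1 - -1 * (1 + lam)) =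
   (lam^2+lam+2)^2 - (1+lam)*(lam^2+lam+2)*lam + (lam^2+lam+1)*lam^2) by ring.
  rewrite E.
  assert (A1 : 0.2955 < lam^2 < 0.2957) by (split; nra).
  set (q := lam^2) in *.
  assert (A2 : (q + lam + 2) ^ 2 >= 2.8391^2) by (apply Rle_ge, pow_incr; lra).
  assert (A3 : (1+lam)*(q+lam+2)*lam <= 1.5437 * 2.8394 * 0.5437).
  { apply Rmult_le_compat; try nra; apply Rmult_le_compat; lra. }
  assert (A4 : (q+lam+1)*q >= 1.8391 * 0.2955) by nra.
  lra.
Qed.

Lemma Hf_P_lower W : Hf lam (let '(a,b,c) := W in (1 - a, -b, -c)) >= Hf lam W / 2 - 1.
Proof.
  destruct W as [[a b] c]. unfold Hf, uf, vf.
  set (u := a - c * (lam^2+lam+1)). set (v := b - c*(1+lam)).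
  replace (1 - a - - c * (lam ^ 2 + lam + 1)) with (1 - u) by (unfold u; ring).
  replace (- b - - c * (1 + lam)) with (- v) by (unfold v; ring).
  pose proof (Qf_nonneg lam (2 - u) (- v)) as Q1.
  unfold Qf in *.
  assert (E : 2 * ((1 - u) * (1 - u) - (1 + lam) * (1 - u) * - v + (lam ^ 2 + lam + 1) * - v * - v) + 2 * 1
     - (u * u - (1 + lam) * u * v + (lam ^ 2 + lam + 1) * v * v)
     = (2 - u) * (2 - u) - (1 + lam) * (2 - u) * - v + (lam ^ 2 + lam + 1) * - v * - v) by ring.
  lra.
Qed.

End S.

Lemma Q2R_injZ z : Q2R (inject_Z z) = IZR z.
Proof. unfold Q2R, inject_Z. simpl. field. Qed.

Lemma Q2R_divZ a b : b <> 0%Z -> Q2R (inject_Z a / inject_Z b) = IZR a / IZR b.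
Proof.
  intro Hb. rewrite Q2R_div. rewrite !Q2R_injZ. reflexivity.
  intro H. apply Qeq_eqR in H. rewrite Q2R_injZ, Q2R_0 in H. apply Hb. apply eq_IZR. exact H.
Qed.

Section S.
Variable lam : R.
Hypothesis Hlam : lam ^ 3 + lam ^ 2 + lam - 1 = 0.

Lemma zr_P N : zr (zP N) = let '(a,b,c) := zr (zpw N) in (1 - a, -b, -c).
Proof. unfold zP. destruct (zpw N) as [[a b] c]. cbv beta iota zeta delta [zr]. rewrite minus_IZR, !opp_IZR. reflexivity. Qed.

Lemma prod_b a b la ua lb ub : 0 < la -> la < a < ua -> 0 < lb -> lb < b < ub -> la * lb < a * b < ua * ub.
Proof. intros. split; nra. Qed.
Lemma sq_small a e c : a^2 <= e -> e < c^2 -> 0 < c -> -c < a < c.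
Proof. intros. split; nra. Qed.
Lemma abs_prod a b c : -c < a < c -> 0 < b < 1 -> -c < a * b < c.
Proof. intros. split; nra. Qed.

Lemma powle1 x n : 0 <= x <= 1 -> x ^ n <= 1.
Proof. intro H. induction n as [|n IH]; simpl; [lra|]. rewrite <- (Rmult_1_r 1). apply Rmult_le_compat; try lra. apply pow_le; lra. Qed.

Lemma coords (N : nat) : (10 <= N)%nat ->
  exists r0 r1 r2 : Q,
    lam^2 / (1 - omega lam ^ N) = Q2R r0 + Q2R r1 * lam + Q2R r2 * lam^2 /\
    (0 <= Q2R r0 < 1 /\ 0 <= Q2R r1 < 1 /\ 0 <= Q2R r2 < 1).
Proof.
  intro HN.
  pose proof (lamd lam Hlam) as [L1 L2].
  pose proof (om_b lam Hlam) as [O1 O2].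
  assert (HoN : 0 < omega lam ^ N <= omega lam).
  { split. apply pow_lt; lra. destruct N as [|N]; [lia|]. change (omega lam ^ S N) with (omega lam * omega lam ^ N).
    apply Rle_trans with (omega lam * 1); [apply Rmult_le_compat_l; [lra| apply powle1; lra] | lra]. }
  set (W := zr (zpw N)).
  set (P := zr (zP N)).
  assert (HrevP : rev3 lam P = 1 - omega lam ^ N).
  { unfold P. rewrite zr_P. fold W. rewrite <- (rev_pw lam Hlam N). fold W.
    destruct W as [[a b] c]. unfold rev3. ring. }
  assert (HHW : Hf lam W >= 6 ^ N).
  { unfold W. rewrite (H_pw lam Hlam). apply Rle_ge, pow_incr. pose proof (H_om lam Hlam). lra. }
  assert (H6 : 6 ^ 10 <= 6 ^ N) by (apply Rle_pow; [lra|lia]).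
  replace (6 ^ 10) with 60466176 in H6 by (simpl; ring).
  assert (HHP : Hf lam P >= 30000000).
  { unfold P. rewrite zr_P. fold W. pose proof (Hf_P_lower lam W). lra. }
  set (nrm := rnrm P).
  assert (Hnrm : nrm = rev3 lam P * Hf lam P) by (apply nrm_id; exact Hlam).
  assert (Hnpos : 0 < nrm) by (rewrite Hnrm, HrevP; apply Rmult_lt_0_compat; lra).
  set (T := rscal (/ nrm) (rmul (0,0,1) (radj P))).
  assert (HTP : rmul T P = (0,0,1)).
  { unfold T. rewrite rmul_scal, rmul_assoc, adj_id. fold nrm.
    cbv beta iota zeta delta [rmul rscal].
    assert (E1 : / nrm * (0 * nrm + (0 * 0 + 1 * 0) - 1 * 0) = 0) by ring.
    assert (E2 : / nrm * (0 * 0 + 0 * nrm - (0 * 0 + 1 * 0) + 2 * (1 * 0)) = 0) by ring.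
    assert (E3 : / nrm * (0 * 0 + 0 * 0 + 1 * nrm - (0 * 0 + 1 * 0)) = 1) by (field; lra).
    rewrite E1, E2, E3. reflexivity. }
  assert (HrevT : rev3 lam T = lam^2 / (1 - omega lam ^ N)).
  { pose proof (rev_mul lam Hlam T P) as E. rewrite HTP, HrevP in E.
    replace (rev3 lam (0,0,1)) with (lam^2) in E by (unfold rev3; ring).
    apply (Rmult_eq_reg_r (1 - omega lam ^ N)); [|lra]. unfold Rdiv.
    rewrite Rmult_assoc, Rinv_l, Rmult_1_r by lra. rewrite E. reflexivity. }
  assert (HHT : Hf lam T * Hf lam P = (lam^2+lam+1)^2).
  { rewrite <- (H_mul lam Hlam), HTP. unfold Hf, Qf, uf, vf. ring. }
  assert (Hb : (lam^2+lam+1)^2 <= 4) by nra.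
  assert (HHT2 : Hf lam T <= 0.0000002).
  { assert (0 <= Hf lam T) by apply Qf_nonneg.
    assert (Hf lam T * 30000000 <= Hf lam T * Hf lam P) by (apply Rmult_le_compat_l; lra). lra. }
  assert (HTz : T = (/nrm * IZR (let '(a,_,_) := zt N in a), /nrm * IZR (let '(_,b,_) := zt N in b),
                     /nrm * IZR (let '(_,_,c) := zt N in c))).
  { unfold T, P. rewrite <- zr_adj.
    replace (0, 0, 1) with (zr (0%Z, 0%Z, 1%Z)) by reflexivity. rewrite <- zr_mul. fold (zt N).
    destruct (zt N) as [[a b] c]. reflexivity. }
  assert (Hnz : nrm = IZR (znrm (zP N))) by (unfold nrm, P; rewrite zr_nrm; reflexivity).
  destruct (zt N) as [[z0 z1] z2].
  destruct T as [[t0 t1] t2] eqn:ET.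
  injection HTz as Ht0 Ht1 Ht2.
  assert (Hnz0 : znrm (zP N) <> 0%Z) by (intro E; rewrite E in Hnz; lra).
  exists (inject_Z z0 / inject_Z (znrm (zP N)))%Q, (inject_Z z1 / inject_Z (znrm (zP N)))%Q,
         (inject_Z z2 / inject_Z (znrm (zP N)))%Q.
  rewrite !Q2R_divZ by exact Hnz0. rewrite <- Hnz.
  replace (IZR z0 / nrm) with t0 by (rewrite Ht0; field; lra).
  replace (IZR z1 / nrm) with t1 by (rewrite Ht1; field; lra).
  replace (IZR z2 / nrm) with t2 by (rewrite Ht2; field; lra).
  unfold rev3 in HrevT.
  split; [rewrite <- HrevT; reflexivity|].
  set (x := lam^2 / (1 - omega lam ^ N)) in *.
  assert (Hl2 : 0.2955 < lam^2 < 0.2957).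
  { pose proof (prod_b lam lam 0.5436 0.5437 0.5436 0.5437 ltac:(lra) ltac:(lra) ltac:(lra) ltac:(lra)).
    simpl. lra. }
  assert (Hx1 : 0.2955 <= x <= 0.357).
  { assert (A : x * (1 - omega lam ^ N) = lam^2) by (unfold x; field; lra).
    split.
    - apply Rmult_le_reg_r with (1 - omega lam ^ N); [lra|].
      assert (0.2955 * (1 - omega lam ^ N) <= 0.2955) by lra. lra.
    - apply Rmult_le_reg_r with (1 - omega lam ^ N); [lra|].
      assert (0.357 * (1 - omega lam ^ N) >= 0.357 * 0.83) by lra. lra. }
  unfold Hf, Qf, uf, vf in HHT2.
  set (u := t0 - t2 * (lam^2+lam+1)) in *. set (v := t1 - t2 * (1+lam)) in *.
  assert (SOS1 : u * u - (1 + lam) * u * v + (lam ^ 2 + lam + 1) * v * v =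
    (u - (1+lam)/2 * v)^2 + ((3*lam^2+2*lam+3)/4) * v^2) by field.
  assert (SOS2 : (lam^2+lam+1) * (u * u - (1 + lam) * u * v + (lam ^ 2 + lam + 1) * v * v) =
    ((lam^2+lam+1) * v - (1+lam)/2 * u)^2 + ((3*lam^2+2*lam+3)/4) * u^2) by field.
  assert (Hc : 1.2 <= (3*lam^2+2*lam+3)/4) by lra.
  assert (Hv : v^2 <= 0.0000002).
  { assert (0 <= (u - (1+lam)/2 * v)^2) by apply pow2_ge_0. assert (0 <= v^2) by apply pow2_ge_0.
    assert (1.2 * v^2 <= (3*lam^2+2*lam+3)/4 * v^2) by (apply Rmult_le_compat_r; lra). lra. }
  assert (Hu : u^2 <= 0.0000004).
  { assert (0 <= ((lam^2+lam+1) * v - (1+lam)/2 * u)^2) by apply pow2_ge_0. assert (0 <= u^2) by apply pow2_ge_0.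
    assert (1.2 * u^2 <= (3*lam^2+2*lam+3)/4 * u^2) by (apply Rmult_le_compat_r; lra).
    assert (0 <= (u - (1+lam)/2 * v)^2) by apply pow2_ge_0. assert (0 <= v^2) by apply pow2_ge_0.
    assert (0 <= (3*lam^2+2*lam+3)/4 * v^2) by (apply Rmult_le_pos; lra).
    assert (Q0 : 0 <= u * u - (1 + lam) * u * v + (lam ^ 2 + lam + 1) * v * v) by (rewrite SOS1; lra).
    assert ((lam^2+lam+1) * (u * u - (1 + lam) * u * v + (lam ^ 2 + lam + 1) * v * v) <= 2 * 0.0000002).
    { apply Rmult_le_compat; lra. }
    lra. }
  assert (Hv' : -0.001 < v < 0.001) by (pose proof (sq_small v 0.0000002 0.001 ltac:(lra) ltac:(lra) ltac:(lra)); lra).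
  assert (Hu' : -0.001 < u < 0.001) by (pose proof (sq_small u 0.0000004 0.001 ltac:(lra) ltac:(lra) ltac:(lra)); lra).
  assert (E2 : t2 * (3*lam^2+2*lam+1) = x - u - v * lam) by (unfold u, v; rewrite <- HrevT; ring).
  assert (D : 2.97 < 3*lam^2+2*lam+1 < 2.98) by lra.
  assert (Hvl : -0.001 < v * lam < 0.001).
  { pose proof (abs_prod v lam 0.001 ltac:(lra) ltac:(lra)). lra. }
  assert (T2b : 0.09 < t2 < 0.13).
  { split.
    - apply Rmult_lt_reg_r with (3*lam^2+2*lam+1); [lra|]. lra.
    - apply Rmult_lt_reg_r with (3*lam^2+2*lam+1); [lra|]. lra. }
  assert (E1 : t1 = v + t2 * (1+lam)) by (unfold v; ring).
  assert (E0 : t0 = u + t2 * (lam^2+lam+1)) by (unfold u; ring).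
  pose proof (prod_b t2 (1+lam) 0.09 0.13 1.5436 1.5437 ltac:(lra) ltac:(lra) ltac:(lra) ltac:(lra)) as P1.
  pose proof (prod_b t2 (lam^2+lam+1) 0.09 0.13 1.8391 1.8394 ltac:(lra) ltac:(lra) ltac:(lra) ltac:(lra)) as P2.
  split; [|split]; split; lra.
Qed.
End S.

Lemma frac_shift r k : 0 <= r < 1 -> frac_part (r + IZR k) = r.
Proof.
  intro H. unfold frac_part, Int_part.
  assert (E : (k + 1)%Z = up (r + IZR k)).
  { apply tech_up; rewrite plus_IZR; lra. }
  rewrite <- E. rewrite minus_IZR, plus_IZR. ring.
Qed.

Lemma frac_id r : 0 <= r < 1 -> frac_part r = r.
Proof. intro H. pose proof (frac_shift r 0 H). rewrite Rplus_0_r in H0. exact H0. Qed.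

Section S.
Variable lam : R.
Hypothesis Hlam : lam ^ 3 + lam ^ 2 + lam - 1 = 0.

Definition xiv (n : nat) : R := lam^2 / (1 - omega lam ^ (n + 2)).

Lemma code_exists sg : valid sg -> exists x, is_code lam sg x.
Proof.
  intro Hv. destruct (sum_exists lam Hlam sg) as [x Hx].
  - intro i. pose proof (dig_facts lam Hlam (sg i) (valid_inr sg Hv i)). lra.
  - exists x. split; auto.
Qed.

Lemma xi_boundary n : (8 <= n)%nat -> in_boundary lam (xiv n).
Proof.
  intro Hn.
  pose proof (lamd lam Hlam) as [L1 L2]. pose proof (om_b lam Hlam) as [O1 O2].
  assert (HP : 0 < omega lam ^ (n+2) < 1).
  { split. apply pow_lt; lra. apply pow_lt_1_compat; [lra|lia]. }
  destruct (code_exists (sX n) (sX_valid n ltac:(lia))) as [x Hx].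
  destruct (code_exists (sY n) (sY_valid n)) as [y Hy].
  pose proof (X_value lam Hlam n ltac:(lia) x Hx) as XV.
  pose proof (Y_value lam Hlam n y Hy) as YV.
  assert (Ex : x = xiv n) by (unfold xiv; field_simplify_eq; [lra|lra]).
  assert (Ey : y = x + 1 - 2 * lam).
  { rewrite (evc2 lam) in YV. rewrite (dig26 lam) in YV.
    assert (Hom : omega lam = 1 - lam - lam^2) by (unfold omega; lra).
    assert (E : omega lam ^ (n+2) = omega lam ^ (S n) * omega lam)
      by (replace (n+2)%nat with (S (S n)) by lia; simpl; ring).
    apply (Rmult_eq_reg_r (1 - omega lam ^ (n+2))); [|lra].
    rewrite YV.
    replace ((x + 1 - 2*lam) * (1 - omega lam^(n+2))) with
      (x * (1 - omega lam ^ (n+2)) + (1 - 2*lam) * (1 - omega lam^(n+2))) by ring.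
    rewrite XV, E. set (W := omega lam ^ S n). rewrite Hom.
    apply Rminus_diag_uniq.
    first [ transitivity (-2 * W * (lam^3+lam^2+lam-1)); [ring | rewrite Hlam; ring]
          | transitivity (2 * W * (lam^3+lam^2+lam-1)); [ring | rewrite Hlam; ring] ]. }
  destruct (coords lam Hlam (n+2) ltac:(lia)) as [r0 [r1 [r2 [Hr [B0 [B1 B2]]]]]].
  fold (xiv n) in Hr.
  exists x, y. split; [|split; [|split; [|split]]].
  - apply (X_periodic lam Hlam n ltac:(lia) x Hx).
  - apply (Y_periodic lam Hlam n y Hy).
  - intro E. rewrite Ey in E. lra.
  - exists r0, r1, r2. split.
    + rewrite Ex. exact Hr.
    + rewrite !frac_id by assumption. exact Hr.
  - exists (r0 + 1)%Q, (r1 + (-2))%Q, r2. split.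
    + rewrite !Q2R_plus, Q2R_1. replace (Q2R (-2)) with (-2) by (unfold Q2R; simpl; lra).
      rewrite Ey, Ex, Hr. ring.
    + rewrite !Q2R_plus, Q2R_1. replace (Q2R (-2)) with (IZR (-2)) by (unfold Q2R; simpl; lra).
      replace 1 with (IZR 1) by reflexivity.
      rewrite !frac_shift, frac_id by assumption. exact Hr.
Qed.

Lemma xi_decr m n : (m < n)%nat -> xiv n < xiv m.
Proof.
  intro H. pose proof (lamd lam Hlam) as [L1 L2]. pose proof (om_b lam Hlam) as [O1 O2].
  unfold xiv.
  assert (A : omega lam ^ (n+2) < omega lam ^ (m+2)).
  { replace (n+2)%nat with ((m+2) + (n - m))%nat by lia. rewrite pow_add.
    pose proof (pow_lt_1_compat (omega lam) (n - m) ltac:(lra) ltac:(lia)) as [_ B].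
    pose proof (pow_lt (omega lam) (m+2) ltac:(lra)).
    rewrite <- (Rmult_1_r (omega lam ^ (m+2))) at 2. apply Rmult_lt_compat_l; lra. }
  assert (B : 0 < omega lam ^ (n+2)) by (apply pow_lt; lra).
  assert (C : omega lam ^ (m+2) < 1) by (apply pow_lt_1_compat; [lra|lia]).
  assert (Hl2 : 0 < lam^2) by (apply pow_lt; lra).
  unfold Rdiv. apply Rmult_lt_compat_l; [lra|]. apply Rinv_lt_contravar; [apply Rmult_lt_0_compat|]; lra.
Qed.

End S.

Theorem proposition1 (lam : R) (Hlam : lam ^ 3 + lam ^ 2 + lam - 1 = 0) :
  ~ (exists l : list R, forall xi : R, in_boundary lam xi -> In xi l).
Proof.
  intros [l Hl].
  set (f := fun i : nat => xiv lam (i + 8)).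
  set (L := map f (seq 0 (S (length l)))).
  assert (Hnd : NoDup L).
  { apply Injective_map_NoDup; [|apply seq_NoDup].
    intros i j E. unfold f in E.
    destruct (Nat.lt_trichotomy i j) as [H|[H|H]]; auto; exfalso.
    - pose proof (xi_decr lam Hlam (i+8) (j+8) ltac:(lia)). lra.
    - pose proof (xi_decr lam Hlam (j+8) (i+8) ltac:(lia)). lra. }
  assert (Hinc : incl L l).
  { intros a Ha. unfold L in Ha. apply in_map_iff in Ha as [i [Ei _]]. subst a.
    apply Hl. apply xi_boundary; auto. lia. }
  pose proof (NoDup_incl_length Hnd Hinc) as Hlen.
  unfold L in Hlen. rewrite length_map, length_seq in Hlen. lia.
Qed.
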